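(* Let $N \ge 1$ and let $W_N$ be the set of binary words of length $N$. Define $\varphi_5 : W_N \to W_N$ by $\varphi_5(u) = v\, 1\, 0^{p+2} v'$ if $u = v 0^p 100 v'$ where $p \geq 1$, $v'$ is a (possibly empty) word, and $v$ is a (possibly empty) word which is either empty or ends with the letter $1$ and such that $v 0^p$ does not contain $0100$ as a contiguous subword; and $\varphi_5(u) = u$ otherwise. Then $|P(\varphi_5(u))| \leq |P(u)|$ for every $u \in W_N$.
   Context: For a binary word $x$, $x^j$ denotes $j$ concatenated copies of $x$, and juxtaposition denotes concatenation. For a binary word $w = w_1 \cdots w_\ell$ of length $\ell$, $P(w)$ is the set of indices $i \geq 2$ such that at least one of the following holds: (i) $\ell \geq i$ and $w_{i-1} w_i = 00$; (ii) $\ell \geq i+2$ and $w_{i-1} w_i w_{i+1} w_{i+2} = 0100$; (iii) $\ell \geq i+3$ and $w_{i-1} \cdots w_{i+3} = 01010$. *)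

(* Defs.v *)
(* Binary words are [seq bool], letter 0 = false, letter 1 = true. *)
From mathcomp Require Import all_boot.
Set Implicit Arguments. Unset Strict Implicit. Unset Printing Implicit Defensive.

(* 1-indexed letter access: w_i = letter w i (only used for 1 <= i <= size w). *)
Definition letter (w : seq bool) (i : nat) : bool := nth false w i.-1.

Definition inP (w : seq bool) (i : nat) : bool :=
  (2 <= i) &&
  [|| (i <= size w) && ~~ letter w i.-1 && ~~ letter w i,
      (i + 2 <= size w) && ~~ letter w i.-1 && letter w i
         && ~~ letter w i.+1 && ~~ letter w i.+2
    | (i + 3 <= size w) && ~~ letter w i.-1 && letter w i
         && ~~ letter w i.+1 && letter w i.+2 && ~~ letter w i.+3 ].

(* P(w) as the (sorted, duplicate-free) list of its elements; every element of
   P(w) lies in [2, size w], so enumerating that range is exhaustive. *)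
Definition Pset (w : seq bool) : seq nat := [seq i <- iota 2 (size w).-1 | inP w i].

Definition is_dec (u v : seq bool) (p : nat) (v' : seq bool) : bool :=
  [&& 0 < p,
      (v == [::]) || last false v,
      ~~ infix [:: false; true; false; false] (v ++ nseq p false)
    & u == v ++ nseq p false ++ [:: true; false; false] ++ v'].

(* All candidate triples (v, p, v'); any decomposition u = v 0^p 100 v' has
   v = take |v| u, v' = drop (|v|+p+3) u with |v|, p <= size u. *)
Definition phi5_candidates (u : seq bool) : seq (seq bool * nat * seq bool) :=
  [seq (take k u, p, drop (k + p + 3) u) | k <- iota 0 (size u).+1, p <- iota 0 (size u).+1].

Definition phi5 (u : seq bool) : seq bool :=
  if [seq t <- phi5_candidates u | is_dec u t.1.1 t.1.2 t.2] is (v, p, v') :: _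
  then v ++ true :: nseq (p + 2) false ++ v'
  else u.

(* Main.v *)
Require Import Defs.
From mathcomp Require Import all_boot.

Definition pat (s : seq bool) : bool :=
  match s with
  | false :: false :: _ => true
  | false :: true :: false :: false :: _ => true
  | false :: true :: false :: true :: false :: _ => true
  | _ => false
  end.

Arguments pat : simpl never.

Fixpoint cnt (s : seq bool) : nat :=
  match s with [::] => 0 | x :: s' => pat (x :: s') + cnt s' end.

Lemma inP_pat w j : inP w j.+2 = pat (drop j w).
Proof.
elim: j w => [|j IH] w.
  case: w => [|a [|b [|c [|d [|e t]]]]]; rewrite /inP /letter /pat /=;
  by repeat match goal with |- context [if ?x then _ else _] => case: x end.
case: w => [|x w].
  by rewrite /inP /letter /=.
rewrite /= -IH /inP /letter /=.
have E : forall m n, (m.+1 <= n.+1) = (m <= n) by [].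
by rewrite !addSn !E.
Qed.

Lemma cnt_count s : count (fun j => pat (drop j s)) (iota 0 (size s).-1) = cnt s.
Proof.
elim: s => [|x s IH] //=.
case: s IH => [|y s] IH; first by case: x; rewrite /pat.
rewrite -IH /=.
congr (_ + _).
rewrite -[1]/(1 + 0) iotaDl count_map.
by apply: eq_count => j.
Qed.

Lemma Pset_cnt w : size (Pset w) = cnt w.
Proof.
rewrite /Pset size_filter -cnt_count -(addn0 2) iotaDl count_map.
by apply: eq_count => j /=; rewrite add2n inP_pat.
Qed.

Lemma cnt_zeros k s : cnt (nseq k.+2 false ++ s) = k.+1 + cnt (false :: s).
Proof.
elim: k => [|k IH] //.
rewrite -[nseq k.+3 false ++ s]/(false :: (nseq k.+2 false ++ s)).
rewrite -[cnt (false :: _)]/(pat (false :: (nseq k.+2 false ++ s)) + cnt (nseq k.+2 false ++ s)).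
by rewrite IH.
Qed.

Lemma cnt_X q v' : cnt (nseq q.+1 false ++ [:: true; false; false] ++ v') = q.+2 + cnt (false :: v').
Proof.
elim: q => [|q IH].
  by rewrite /= /pat.
rewrite -[nseq q.+2 false ++ _]/(false :: (nseq q.+1 false ++ [:: true; false; false] ++ v')).
rewrite -[cnt (false :: _)]/(pat (false :: (nseq q.+1 false ++ [:: true; false; false] ++ v')) + cnt (nseq q.+1 false ++ [:: true; false; false] ++ v')).
by rewrite IH.
Qed.

Lemma cnt_XY q v' : cnt (true :: nseq (q.+1 + 2) false ++ v') =
  cnt (nseq q.+1 false ++ [:: true; false; false] ++ v').
Proof.
have CT : forall l, cnt (true :: l) = cnt l by move=> l; rewrite /= /pat.
by rewrite cnt_X addn2 CT cnt_zeros.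
Qed.

Lemma pat_le q v' t : last false t ->
  pat (t ++ true :: nseq (q.+1 + 2) false ++ v') <=
  pat (t ++ nseq q.+1 false ++ [:: true; false; false] ++ v').
Proof.
rewrite addn2.
case: q => [|q];
case: t => [|a [|b [|c [|d [|e t]]]]] //=; rewrite /pat /=;
repeat match goal with |- context [if ?x then _ else _] => case: x end => //.
Qed.

Lemma cnt_le q v' v : (v == [::]) || last false v ->
  cnt (v ++ true :: nseq (q.+1 + 2) false ++ v') <=
  cnt (v ++ nseq q.+1 false ++ [:: true; false; false] ++ v').
Proof.
elim: v => [|x v IH] H.
  by rewrite cat0s cnt_XY.
rewrite [cat _ _]/= [cnt (x :: _)]/= [cnt (x :: (v ++ nseq _ _ ++ _))]/=.
apply: leq_add.
  by case/orP: H => // H; exact: (pat_le q v' (x :: v) H).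
have := IH _; apply.
by case: v H {IH}.
Qed.

Theorem lemma4p5 (N : nat) (u : seq bool) :
  1 <= N -> size u = N -> size (Pset (phi5 u)) <= size (Pset u).
Proof.
move=> _ _.
rewrite /phi5.
case E: [seq t <- phi5_candidates u | is_dec u t.1.1 t.1.2 t.2] => [|[[v p] v'] rest] //.
have := mem_head (v, p, v') rest.
rewrite -E mem_filter => /andP[/= H _].
case/and4P: H => Hp Hv _ /eqP ->.
clear E; case: p Hp => [|q] // _.
rewrite !Pset_cnt.
exact: cnt_le.
Qed.
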